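(* Let $\mathcal{X}\subseteq\mathbb{R}^n$ and $f_{cl}:\mathcal{X}\to\mathbb{R}^n$ be locally Lipschitz continuous with constant $L_f$ (i.e. $\|f_{cl}(x)-f_{cl}(z)\|\le L_f\|x-z\|$) for all initial conditions $x_0\in\mathcal{X}$. Consider the nominal system $\dot x=f_{cl}(x)$ with solution signals $\phi(x_0)$ and, for $d\in\mathbb{R}^n$, the perturbed system $\dot x=f_{cl}(x)+d$ with solution signals $\phi^d(x_0)$. Let $\psi$ be one of $\mathbf{G}_{[a,b']}\omega$, $\mathbf{F}_{[a,b']}\omega$, or $\omega_1\,\mathbf{U}_{[a,b']}\,\omega_2$, where $\omega,\omega_1,\omega_2$ are built by the grammar $\omega=\mathrm{true}\mid\mu\mid\neg\mu\mid\omega_1\wedge\omega_2$ from predicates $\mu(x)=\mathrm{true}\iff h_\mu(x)\ge0$. Let $\rho$ be a robustness measure for $\psi$, i.e. $\rho(s,0)\ge0\iff(s,0)\models\psi$ for all signals $s$, and suppose there exist $L_\rho\ge0$ and $b>0$ with $$|\rho(s,0)-\rho(z,0)|\le L_\rho\|s-z\|_{[0,b]}\quad\text{for all signals } s,z,$$ where $\|s\|_{[0,b]}=\max_{t\in[0,b]}\|s(t)\|$. Assume $[0,b]$ is contained in the intervals of existence of both the nominal and perturbed solutions from every $x_0\in\mathcal{X}$. Let $\Delta_d=\min_{x\in\mathcal{X}}\rho(\phi(x),0)$. If $\Delta_d\ge0$, then for every $d$ with $$\|d\|\le\frac{\Delta_d}{L_\rho\, b\, e^{L_f b}}=:\delta^1_d$$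 and every $x_0\in\mathcal{X}$, we have $(\phi^d(x_0),0)\models\psi$.
   Context: $\|\cdot\|$ is the Euclidean 2-norm. A signal is a map $s:[0,T]\to\mathbb{R}^n$. Signal Temporal Logic satisfaction at time $0$ is standard: $(s,0)\models\mathbf{G}_{[a,b']}\omega$ iff $\omega(s(t))$ holds for all $t\in[a,b']$; $(s,0)\models\mathbf{F}_{[a,b']}\omega$ iff $\omega(s(t))$ holds for some $t\in[a,b']$; $(s,0)\models\omega_1\mathbf{U}_{[a,b']}\omega_2$ iff there is $t'\in[a,b']$ with $\omega_2(s(t'))$ true and $\omega_1(s(t))$ true for all $t$ from the start of the interval up to $t'$ ($\omega_1$ holds until $\omega_2$ holds, by time $b'$). *)

(* Defs.v *)
From HB Require Import structures.
From mathcomp Require Import all_boot all_order all_algebra.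
From mathcomp Require Import all_classical all_reals all_analysis.
Set Implicit Arguments. Unset Strict Implicit. Unset Printing Implicit Defensive.
Import Order.TTheory GRing.Theory Num.Theory.
Import numFieldNormedType.Exports.
Local Open Scope classical_set_scope.
Local Open Scope ring_scope.

Section Defs.
Variables (R : realType) (n : nat).
Notation V := 'rV[R]_n.

Definition enorm (x : V) : R := Num.sqrt (\sum_(i < n) (x ord0 i) ^+ 2).

(* signals: maps time -> R^n (only values on the relevant interval matter) *)
Definition signal := R -> V.

Inductive sform :=
| STrue
| SPred (h : V -> R)
| SNegPred (h : V -> R)
| SAnd (w1 w2 : sform).

Fixpoint sholds (w : sform) (x : V) : Prop :=
  match w with
  | STrue => True
  | SPred h => 0 <= h x
  | SNegPred h => ~ (0 <= h x)
  | SAnd w1 w2 => sholds w1 x /\ sholds w2 x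
  end.

Inductive tform :=
| TG (a b' : R) (w : sform)
| TF (a b' : R) (w : sform)
| TU (a b' : R) (w1 w2 : sform).

Definition sat0 (psi : tform) (s : signal) : Prop :=
  match psi with
  | TG a b' w => forall t, a <= t <= b' -> sholds w (s t)
  | TF a b' w => exists t, a <= t <= b' /\ sholds w (s t)
  | TU a b' w1 w2 => exists t', a <= t' <= b' /\ sholds w2 (s t') /\
                       forall t, a <= t <= t' -> sholds w1 (s t)
  end.

(* y is a solution of xdot = g(x) on [0,b] starting at x0, with state in X
   (g is only defined on X); derivatives are taken within [0,b]
   (one-sided at the endpoints). *)
Definition is_solution (X : set V) (g : V -> V) (b : R) (x0 : V) (y : signal) : Prop :=
  y 0 = x0 /\
  (forall t, 0 <= t <= b -> X (y t)) /\
  (forall t, 0 <= t <= b ->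
     (fun h : R => h^-1 *: (y (t + h) - y t))
       @ within [set h : R | h != 0 /\ 0 <= t + h <= b] (nbhs (0 : R))
       --> g (y t)).

End Defs.

(* Main.v *)
Require Import Defs.
From HB Require Import structures.
From mathcomp Require Import all_boot all_order all_algebra.
From mathcomp Require Import all_classical all_reals all_analysis.
From mathcomp Require Import ring lra.
Import Order.TTheory GRing.Theory Num.Theory.
Import numFieldNormedType.Exports.
Local Open Scope classical_set_scope.
Local Open Scope ring_scope.

Lemma subsub (V : zmodType) (a b c d : V) : (a - b) - (c - d) = (a - c) - (b - d).
Proof. by rewrite !opprB addrACA [RHS]addrACA; congr (_ + _); exact: addrC. Qed.

Section E.
Variables (R : realType) (n : nat).
Implicit Types a b : 'rV[R]_n.

Lemma enorm_ge0 a : 0 <= enorm a.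
Proof. exact: sqrtr_ge0. Qed.

Lemma enorm_sq a : enorm a ^+ 2 = \sum_(i < n) (a ord0 i) ^+ 2.
Proof. by rewrite /enorm sqr_sqrtr // sumr_ge0 // => i _; exact: sqr_ge0. Qed.

Lemma enorm_eq0 a : enorm a = 0 -> forall i, a ord0 i = 0.
Proof.
move=> h i; have : \sum_(i < n) (a ord0 i) ^+ 2 = 0 by rewrite -enorm_sq h expr0n.
move/psumr_eq0P => /(_ (fun i _ => sqr_ge0 _) i isT) /eqP.
by rewrite sqrf_eq0 => /eqP.
Qed.

Lemma cs a b : \sum_(i < n) a ord0 i * b ord0 i <= enorm a * enorm b.
Proof.
have [A0|] := eqVneq (enorm a) 0.
  rewrite A0 mul0r big1 // => i _; by rewrite (enorm_eq0 _ A0) mul0r.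
have [B0|] := eqVneq (enorm b) 0.
  rewrite B0 mulr0 big1 // => i _; by rewrite (enorm_eq0 _ B0) mulr0.
move=> hB hA.
have pA : 0 < enorm a by rewrite lt_neqAle eq_sym hA enorm_ge0.
have pB : 0 < enorm b by rewrite lt_neqAle eq_sym hB enorm_ge0.
set A := enorm a; set B := enorm b.
have key : 2 * (A * B) * \sum_(i < n) a ord0 i * b ord0 i <= 2 * (A * B) * (A * B).
  have -> : 2 * (A * B) * (A * B) = \sum_(i < n) ((B * a ord0 i) ^+ 2 + (A * b ord0 i) ^+ 2).
    rewrite big_split /= -!(eq_bigr _ (fun i _ => esym (exprMn _ _ _))) -!mulr_sumr.
    rewrite -!enorm_sq -/A -/B; ring.
  rewrite mulr_sumr; apply: ler_sum => i _.
  rewrite -subr_ge0.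
  have -> : (B * a ord0 i) ^+ 2 + (A * b ord0 i) ^+ 2 - 2 * (A * B) * (a ord0 i * b ord0 i) = (B * a ord0 i - A * b ord0 i) ^+ 2 by ring.
  exact: sqr_ge0.
by rewrite ler_pM2l ?mulr_gt0 in key.
Qed.

Lemma enormD a b : enorm (a + b) <= enorm a + enorm b.
Proof.
rewrite -(@ler_pXn2r _ 2) ?nnegrE ?addr_ge0 ?enorm_ge0 //.
rewrite enorm_sq.
have -> : \sum_(i < n) ((a + b) ord0 i) ^+ 2 = enorm a ^+ 2 + enorm b ^+ 2 + 2 * \sum_(i < n) a ord0 i * b ord0 i.
  rewrite !enorm_sq mulr_sumr -!big_split /=; apply: eq_bigr => i _; rewrite mxE; ring.
have := cs a b; nra.
Qed.

Lemma enormZ (k : R) a : enorm (k *: a) = `|k| * enorm a.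
Proof.
apply/eqP; rewrite -(@eqrXn2 _ 2) // ?mulr_ge0 ?enorm_ge0 //.
rewrite exprMn !enorm_sq mulr_sumr; apply/eqP/eq_bigr => i _.
by rewrite mxE exprMn real_normK // num_real.
Qed.

Lemma enormN a : enorm (- a) = enorm a.
Proof. by rewrite -scaleN1r enormZ normrN normr1 mul1r. Qed.

Lemma coord_le a i : `|a ord0 i| <= `|a|.
Proof.
rewrite [leRHS]/Num.norm /= mx_normrE.
exact: (le_bigmax _ (fun ij : 'I_1 * 'I_n => `|a ij.1 ij.2|) (ord0, i)).
Qed.

Lemma enorm_le_mx a : enorm a <= n%:R * `|a|.
Proof.
rewrite -(@ler_pXn2r _ 2) ?nnegrE ?mulr_ge0 ?enorm_ge0 // enorm_sq.
apply: (@le_trans _ _ (\sum_(i < n) `|a| ^+ 2)).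
  apply: ler_sum => i _; rewrite -real_normK ?num_real //.
  by rewrite lerXn2r ?nnegrE // coord_le.
rewrite sumr_const card_ord exprMn -mulr_natl.
have h : (n%:R : R) <= n%:R ^+ 2.
  case: n => [|m]; first by rewrite expr0n.
  by rewrite -natrX ler_nat expnS leq_pmulr.
have := sqr_ge0 `|a|; nra.
Qed.

Lemma enorm_dist a b : `|enorm a - enorm b| <= enorm (a - b).
Proof.
have h1 := enormD (a - b) b; have h2 := enormD (b - a) a.
rewrite subrK in h1; rewrite subrK -opprB enormN in h2.
rewrite ler_norml; apply/andP; split; lra.
Qed.

Lemma loc_est (y p : signal R n) (gy gp : 'rV[R]_n) (b t : R) :
  (fun h : R => h^-1 *: (y (t + h) - y t))
       @ within [set h : R | h != 0 /\ 0 <= t + h <= b] (nbhs (0 : R)) --> gy ->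
  (fun h : R => h^-1 *: (p (t + h) - p t))
       @ within [set h : R | h != 0 /\ 0 <= t + h <= b] (nbhs (0 : R)) --> gp ->
  forall eta, 0 < eta -> exists2 del, 0 < del & forall s, 0 <= s <= b -> `|s - t| < del ->
     `|enorm (y s - p s) - enorm (y t - p t)| <= `|s - t| * (enorm (gy - gp) + eta).
Proof.
move=> Hy Hp eta eta0.
have ep0 : 0 < eta / (2 * n%:R + 1) by rewrite divr_gt0 // ltr_wpDl // mulr_ge0.
have := cvgr_dist_lt _ _ Hy _ ep0.
move=> /(_ (within_filter _ _)); rewrite near_withinE => /(iffLR (nbhs_ballP _ _)) [d1 d10 H1].
have := cvgr_dist_lt _ _ Hp _ ep0.
move=> /(_ (within_filter _ _)); rewrite near_withinE => /(iffLR (nbhs_ballP _ _)) [d2 d20 H2].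
exists (Num.min d1 d2); first by rewrite lt_min d10 d20.
move=> s sb sd.
have [->|st] := eqVneq s t; first by rewrite !subrr normr0 mul0r.
set h := s - t.
have hs : s = t + h by rewrite /h addrC subrK.
have h0 : h != 0 by rewrite /h subr_eq0.
have Ph : [set h | h != 0 /\ 0 <= t + h <= b] h by split => //; rewrite -hs.
have md1 : Num.min d1 d2 <= d1 by rewrite ge_min lexx.
have md2 : Num.min d1 d2 <= d2 by rewrite ge_min lexx orbT.
have B1 : ball 0 d1 h by rewrite -ball_normE /ball_ /= sub0r normrN; lra.
have B2 : ball 0 d2 h by rewrite -ball_normE /ball_ /= sub0r normrN; lra.
have E1 := H1 h B1 Ph; have E2 := H2 h B2 Ph.
rewrite -hs in E1 E2.
set Qy := h^-1 *: (y s - y t) in E1 *.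
set Qp := h^-1 *: (p s - p t) in E2 *.
have eq1 : (y s - p s) - (y t - p t) = h *: (Qy - Qp).
  by rewrite /Qy /Qp -scalerBr scalerA mulfV // scale1r subsub.
apply: le_trans (enorm_dist _ _) _.
rewrite eq1 enormZ; apply: ler_wpM2l => //.
have -> : Qy - Qp = (gy - gp) + ((Qy - Qp) - (gy - gp)) by rewrite [RHS]addrC subrK.
apply: le_trans (enormD _ _) _; rewrite lerD2l.
apply: le_trans (enorm_le_mx _) _.
have : `|Qy - Qp - (gy - gp)| <= `|gy - Qy| + `|gp - Qp|.
  have -> : Qy - Qp - (gy - gp) = - (gy - Qy) + (gp - Qp) by rewrite subsub !opprB.
  by apply: le_trans (ler_normD _ _) _; rewrite normrN.
have hn : 0 <= (n%:R : R) by [].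
have : n%:R * (eta / (2 * n%:R + 1)) * 2 <= eta.
  have hq : eta / (2 * n%:R + 1) * (2 * n%:R + 1) = eta.
    by rewrite divfK // gt_eqF // ltr_wpDl // mulr_ge0.
  move: hq (ltW ep0); set q := eta / (2 * n%:R + 1); nra.
move=> hh hle.
apply: le_trans (ler_wpM2l hn hle) _.
nra.
Qed.
End E.
Arguments enorm_ge0 {R n}. Arguments enormD {R n}. Arguments enormZ {R n}.
Arguments enormN {R n}. Arguments loc_est {R n}. Arguments enorm_dist {R n}.

Lemma gron (R : realType) (e w : R -> R) (b : R) : 0 <= b ->
 e 0 <= w 0 ->
 (forall s t, 0 <= s -> s <= t -> t <= b -> w s <= w t) ->
 (forall t, 0 < t -> t <= b -> forall eta, 0 < eta -> exists2 del, 0 < del &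
    forall s, 0 <= s -> s < t -> t - s < del -> e t <= e s + eta) ->
 (forall t, 0 <= t -> t < b -> e t <= w t -> exists2 del, 0 < del &
    forall h, 0 < h -> h < del -> t + h <= b -> e (t + h) <= w (t + h)) ->
 forall t, 0 <= t -> t <= b -> e t <= w t.
Proof.
move=> b0 H0 Hmono Hleft Hright.
pose A := [set t : R | 0 <= t <= b /\ forall s, 0 <= s -> s <= t -> e s <= w s].
have A0 : A 0.
  split; first by rewrite lexx b0.
  move=> s s0 s0'; have -> : s = 0 by apply/eqP; rewrite eq_le s0 s0'.
  exact: H0.
have hs : has_sup A.
  split; first by exists 0.
  by exists b => x [/andP[_ ?] _].
set T := sup A.
have Tub : forall x, A x -> x <= T by move=> x Ax; exact: sup_upper_bound.
have T0 : 0 <= T by exact: Tub.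
have Tb : T <= b.
  apply: ge_sup => //; first by exists 0.
  by move=> x [/andP[_ ?] _].
have C1 : forall s, 0 <= s -> s < T -> e s <= w s.
  move=> s s0 sT.
  have [a [_ Ha] sa] := @sup_adherent _ A (T - s) ltac:(by rewrite subr_gt0) hs.
  have : s < a by rewrite -/T in sa; lra.
  by move=> /ltW; apply: Ha.
have C2 : e T <= w T.
  have [->|Tpos] := eqVneq T 0; first exact: H0.
  have Tp : 0 < T by rewrite lt_neqAle eq_sym Tpos T0.
  rewrite leNgt; apply/negP => hlt.
  have eta0 : 0 < (e T - w T) / 2 by rewrite divr_gt0 // subr_gt0.
  have [del del0 Hd] := Hleft T Tp Tb _ eta0.
  pose s := T - Num.min del T / 2.
  have m0 : 0 < Num.min del T by rewrite lt_min del0 Tp.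
  have mT : Num.min del T <= T by rewrite ge_min lexx orbT.
  have md : Num.min del T <= del by rewrite ge_min lexx.
  have s0 : 0 <= s by rewrite /s; lra.
  have sT : s < T by rewrite /s; lra.
  have := Hd s s0 sT ltac:(rewrite /s; lra).
  have := C1 s s0 sT.
  have := Hmono s T s0 (ltW sT) Tb.
  lra.
have AT : A T.
  split; first by rewrite T0 Tb.
  move=> s s0; rewrite le_eqVlt => /orP[/eqP ->|]; first exact: C2.
  exact: C1 s s0.
have TbE : T = b.
  apply/eqP; rewrite eq_le Tb /=; rewrite leNgt; apply/negP => Tlt.
  have [del del0 Hd] := Hright T T0 Tlt C2.
  pose h := Num.min del (b - T) / 2.
  have m0 : 0 < Num.min del (b - T) by rewrite lt_min del0 subr_gt0 Tlt.
  have mT : Num.min del (b - T) <= b - T by rewrite ge_min lexx orbT.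
  have md : Num.min del (b - T) <= del by rewrite ge_min lexx.
  have : A (T + h).
    split; first by apply/andP; split; rewrite /h; lra.
    move=> s s0 sh; have [sT|Ts] := leP s T; first by case: AT => _; apply.
    have -> : s = T + (s - T) by ring.
    apply: Hd; rewrite /h in sh; lra.
  move/Tub; rewrite /h; lra.
move=> t t0 tb; case: AT => _; apply => //; by rewrite TbE.
Qed.


Lemma wgrow (R : realType) (c K t h : R) : 0 <= c -> 0 <= K -> 0 <= t -> 0 <= h ->
  c * t * expR (K * t) + h * (c + K * (c * t * expR (K * t))) <= c * (t + h) * expR (K * (t + h)).
Proof.
move=> c0 K0 t0 h0.
rewrite [K * (t + h)]mulrDr expRD.
have E1 := expR_ge1Dx (K * h).
have E2 := expR_ge1Dx (K * t).
have Kt : 0 <= K * t by rewrite mulr_ge0.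
have Kh : 0 <= K * h by rewrite mulr_ge0.
set A := expR (K * t) in E2 *; set B := expR (K * h) in E1 *.
have A1 : 1 <= A by lra.
have ct : 0 <= c * t by rewrite mulr_ge0.
have ch : 0 <= c * h by rewrite mulr_ge0.
have cA : c <= c * A by rewrite ler_peMr.
have P1 : c * (t + h) * A * (1 + K * h) <= c * (t + h) * (A * B).
  rewrite mulrA; apply: ler_wpM2l => //; rewrite mulr_ge0 // ?addr_ge0 //; lra.
apply: le_trans P1.
have : 0 <= c * h * A * (K * h) by rewrite !mulr_ge0 //; lra.
have : h * c <= h * (c * A) by rewrite ler_wpM2l.
nra.
Qed.

Theorem theorem3 (R : realType) (n : nat) (X : set 'rV[R]_n)
  (f : 'rV[R]_n -> 'rV[R]_n) (Lf : R)
  (phi : 'rV[R]_n -> signal R n)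
  (psi : tform R n) (rho : signal R n -> R) (Lrho b : R) (Delta : R) :
  (forall x z, X x -> X z -> enorm (f x - f z) <= Lf * enorm (x - z)) ->
  (forall x0, X x0 -> is_solution X f b x0 (phi x0)) ->
  (forall s, 0 <= rho s <-> sat0 psi s) ->
  0 <= Lrho -> 0 < b ->
  (forall (s z : signal R n) (M : R),
      (forall t, 0 <= t <= b -> enorm (s t - z t) <= M) ->
      `|rho s - rho z| <= Lrho * M) ->
  (exists2 x, X x & rho (phi x) = Delta) ->
  (forall x, X x -> Delta <= rho (phi x)) ->
  0 <= Delta ->
  forall d : 'rV[R]_n,
    enorm d * (Lrho * b * expR (Lf * b)) <= Delta ->
    forall x0 (y : signal R n), X x0 ->
      is_solution X (fun x => f x + d) b x0 y ->
      sat0 psi y.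
Proof.
move=> HL Hphi Hrho Lr0 b0 Hlip _ Hmin D0 d Hd x0 y X0 Hy.
apply/Hrho.
set p := phi x0.
have [p0 [pX pD]] := Hphi x0 X0.
have [y0 [yX yD]] := Hy.
set D := enorm d.
have D0' : 0 <= D by exact: enorm_ge0.
set M := D * b * expR (Lf * b).
have M0 : 0 <= M by rewrite /M !mulr_ge0 ?expR_ge0 // ltW.
have Hbound : forall t, 0 <= t <= b -> enorm (y t - p t) <= M.
  move=> t /andP[t0 tb].
  have HLt := HL (y t) (p t) (yX t ltac:(by rewrite t0 tb)) (pX t ltac:(by rewrite t0 tb)).
  have [Lneg|Lpos] := ltP Lf 0.
    have := enorm_ge0 (f (y t) - f (p t)); have := enorm_ge0 (y t - p t); nra.
  have e0 : enorm (0 : 'rV[R]_n) = 0.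
    by rewrite -(scale0r (0 : 'rV[R]_n)) enormZ normr0 mul0r.
  pose e := fun s => enorm (y s - p s).
  have key : forall eps, 0 < eps -> e t <= (D + eps) * t * expR (Lf * t).
    move=> eps eps0.
    pose w := fun s => (D + eps) * s * expR (Lf * s).
    have c0 : 0 <= D + eps by rewrite addr_ge0 // ltW.
    apply: (@gron R e w b (ltW b0)) => //.
    - by rewrite /e /w /p y0 p0 subrr e0 mulr0 mul0r lexx.
    - move=> s u s0 su ub; rewrite /w.
      apply: ler_pM; rewrite ?mulr_ge0 ?expR_ge0 //.
        by rewrite ler_wpM2l.
      by rewrite ler_expR ler_wpM2l.
    - move=> s s0 sb eta eta0.
      have sb' : 0 <= s <= b by rewrite (ltW s0) sb.
      have [del del0 Hdel] := loc_est y p (f (y s) + d) (f (p s)) b s (yD s sb') (pD s sb') 1 ltr01.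
      set V := enorm (f (y s) + d - f (p s)) in Hdel.
      have V0 : 0 < V + 1 by rewrite ltr_wpDl // enorm_ge0.
      exists (Num.min del (eta / (V + 1))).
        by rewrite lt_min del0 divr_gt0.
      move=> r r0 rs srd.
      have md1 : Num.min del (eta / (V + 1)) <= del by rewrite ge_min lexx.
      have md2 : Num.min del (eta / (V + 1)) <= eta / (V + 1) by rewrite ge_min lexx orbT.
      have rsn : `|r - s| = s - r by rewrite distrC ger0_norm // subr_ge0 ltW.
      have := Hdel r ltac:(by rewrite r0 /= (le_trans (ltW rs) sb)) ltac:(rewrite rsn; lra).
      rewrite rsn.
      have : (s - r) * (V + 1) < eta by rewrite -ltr_pdivlMr //; lra.
      rewrite ler_norml /e; lra.
    - move=> s s0 sb hle.
      have sb' : 0 <= s <= b by rewrite s0 (ltW sb).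
      have eps2 : 0 < eps / 2 by rewrite divr_gt0.
      have [del del0 Hdel] := loc_est y p (f (y s) + d) (f (p s)) b s (yD s sb') (pD s sb') _ eps2.
      exists del => // hh hh0 hhd hb.
      have hhn : `|s + hh - s| = hh by rewrite addrAC subrr add0r gtr0_norm.
      have := Hdel (s + hh) ltac:(by rewrite hb addr_ge0 // ltW) ltac:(by rewrite hhn).
      rewrite hhn.
      have HV : enorm (f (y s) + d - f (p s)) <= Lf * e s + D.
        rewrite addrAC; apply: le_trans (enormD _ _) _; rewrite lerD2r.
        exact: HL (yX s sb') (pX s sb').
      have W := @wgrow R (D + eps) Lf s hh c0 Lpos s0 (ltW hh0).
      have LW : Lf * e s <= Lf * w s by rewrite ler_wpM2l.
      move: hle; rewrite /w /e in W LW * => hle.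
      set Ws := (D + eps) * s * expR (Lf * s) in W LW hle *.
      set ES := enorm (y s - p s) in HV LW hle *.
      set V := enorm (f (y s) + d - f (p s)) in HV *.
      rewrite ler_norml => /andP[_ H2].
      have : hh * V <= hh * (Lf * ES + D) by rewrite ler_wpM2l // ltW.
      nra.
  have B0 : 0 < b * expR (Lf * b) by rewrite mulr_gt0 // expR_gt0.
  have tB : t * expR (Lf * t) <= b * expR (Lf * b).
    by apply: ler_pM; rewrite ?expR_ge0 // ler_expR ler_wpM2l.
  apply/ler_addgt0Pr => eta eta0.
  have := key (eta / (b * expR (Lf * b))) (divr_gt0 eta0 B0).
  have hq : eta / (b * expR (Lf * b)) * (b * expR (Lf * b)) = eta by rewrite divfK // gt_eqF.
  move: hq; set q := eta / (b * expR (Lf * b)) => hq.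
  have q0 : 0 <= q by rewrite /q divr_ge0 // ltW.
  rewrite /M /e -mulrA; move=> H.
  apply: le_trans H _.
  rewrite -mulrA.
  have := ler_wpM2l (addr_ge0 D0' q0) tB.
  nra.
have := Hlip y p M Hbound.
have := Hmin x0 X0.
rewrite -/p.
have : Lrho * M <= Delta by rewrite /M; move: Hd; rewrite /D; nra.
rewrite ler_norml; nra.
Qed.
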